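(* Consider the two-unicast wireline network (''butterfly network 2'') with nodes $\mathsf{S}_1,\mathsf{S}_2,\mathsf{M}_1,\mathsf{M}_2,\mathsf{D}_1,\mathsf{D}_2$ and seven directed edges: edge 1 from $\mathsf{S}_1$ to $\mathsf{M}_1$, edge 2 from $\mathsf{S}_2$ to $\mathsf{M}_1$, edge 3 from $\mathsf{M}_1$ to $\mathsf{M}_2$, edge 4 from $\mathsf{S}_1$ to $\mathsf{D}_1$, edge 5 from $\mathsf{S}_2$ to $\mathsf{D}_2$, edge 6 from $\mathsf{M}_2$ to $\mathsf{D}_2$, edge 7 from $\mathsf{M}_2$ to $\mathsf{D}_1$, where edge $i$ has capacity $\mathsf{C}_i\ge0$. Then every nonnegative rate pair $(R_1,R_2)$ satisfying $$R_1\le \min\{\mathsf{C}_1,\mathsf{C}_7\}+\min\{R_1,\mathsf{C}_4\},\quad R_2\le \min\{\mathsf{C}_2,\mathsf{C}_6\}+\min\{R_2,\mathsf{C}_5\},$$ $$R_1+R_2\le \mathsf{C}_3+\min\{R_2,\mathsf{C}_5\}+\min\{R_1,\mathsf{C}_4\}$$ is achievable (without security constraints).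
   Context: Network model: a directed acyclic graph; each edge $e$ is a noiseless orthogonal channel of capacity $\mathsf{C}_e$ carrying symbols over $\mathbb{F}_q$; over $n$ channel uses edge $e$ carries $X_e^n$, received as $Y_e^n=X_e^n$. Source $\mathsf{S}_i$ has message $W_i$ (uniform, $q$-ary entropy $nR_i$, $W_1,W_2$ independent) to be decoded at $\mathsf{D}_i$. A rate pair is achievable if for some block length $n$ there are encoding functions—an edge leaving $\mathsf{S}_i$ carries a function of $W_i$, any other edge a function of the symbols received on the incoming edges of its tail—and decoders at $\mathsf{D}_j$ (functions of the symbols on its incoming edges) recovering $W_j$ with vanishing error probability, $j=1,2$. *)

(* Defs.v *)
From mathcomp Require Import all_boot.
From Stdlib Require Import Reals.

Set Implicit Arguments.
Unset Strict Implicit.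
Unset Printing Implicit Defensive.

Definition floorR (x : R) : nat := Z.to_nat (Int_part x).

(* number of q-ary symbols an edge of capacity c carries over n channel uses *)
Definition nsym (n : nat) (c : R) : nat := floorR (INR n * c).

Definition blk (q n : nat) (c : R) : Type := (nsym n c).-tuple 'I_q.

Definition prime_power (q : nat) : Prop :=
  exists p k : nat, prime p /\ (0 < k)%N /\ q = (p ^ k)%N.

(* Achievability for butterfly network 2:
   edges 1: S1->M1, 2: S2->M1, 3: M1->M2, 4: S1->D1, 5: S2->D2,
         6: M2->D2, 7: M2->D1.
   (R1,R2) is achievable if for every eps > 0 there is a block length n and a
   code with message sets of sizes M1, M2 (log_q M_i >= n (R_i - eps)),
   edge encoding functions respecting the topology, and decoders at D1, D2,
   whose error probability (messages uniform and independent) is <= eps. *)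
Definition bf2_achievable (q : nat) (C1 C2 C3 C4 C5 C6 C7 R1 R2 : R) : Prop :=
  forall eps : R, (0 < eps)%R ->
  exists n M1 M2 : nat,
    (0 < n)%N /\
    (Rpower (INR q) (INR n * (R1 - eps)) <= INR M1)%R /\
    (Rpower (INR q) (INR n * (R2 - eps)) <= INR M2)%R /\
    exists (f1 : 'I_M1 -> blk q n C1) (f4 : 'I_M1 -> blk q n C4)
           (f2 : 'I_M2 -> blk q n C2) (f5 : 'I_M2 -> blk q n C5)
           (f3 : blk q n C1 -> blk q n C2 -> blk q n C3)
           (f6 : blk q n C3 -> blk q n C6)
           (f7 : blk q n C3 -> blk q n C7)
           (g1 : blk q n C4 -> blk q n C7 -> 'I_M1)
           (g2 : blk q n C5 -> blk q n C6 -> 'I_M2),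
      (INR #|[set w : 'I_M1 * 'I_M2 |
               (g1 (f4 w.1) (f7 (f3 (f1 w.1) (f2 w.2))) != w.1)
            || (g2 (f5 w.2) (f6 (f3 (f1 w.1) (f2 w.2))) != w.2)]|
         <= eps * INR (M1 * M2))%R.

(* Main.v *)
Require Import Defs.
From mathcomp Require Import all_boot.
From Stdlib Require Import Reals.
From Stdlib Require Import Lra Lia ZArith.
Import ssrnat.

Lemma floorR_spec x : (0 <= x)%R -> (INR (floorR x) <= x < INR (floorR x) + 1)%R.
Proof.
move=> Hx; rewrite /floorR.
have [Ha Hb] := base_Int_part x.
have Hz : (0 <= Int_part x)%Z.
  have : (IZR (-1) < IZR (Int_part x))%R by rewrite /=; lra.
  move/lt_IZR; lia.
rewrite INR_IZR_INZ Z2Nat.id //; lra.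
Qed.

Lemma floorR_mono x y : (0 <= x)%R -> (x <= y)%R -> floorR x <= floorR y.
Proof.
move=> Hx Hxy.
have [A B] := floorR_spec _ Hx.
have [C D] := floorR_spec _ (ltac:(lra) : (0 <= y)%R).
have : (INR (floorR x) < INR (floorR y + 1))%R by rewrite plus_INR /=; lra.
move/INR_lt/ltP; rewrite addn1 ltnS //.
Qed.

Lemma floorR_add x y : (0 <= x)%R -> (0 <= y)%R -> floorR x + floorR y <= floorR (x + y).
Proof.
move=> Hx Hy.
have [A B] := floorR_spec _ Hx.
have [C D] := floorR_spec _ Hy.
have [E F] := floorR_spec _ (ltac:(lra) : (0 <= x + y)%R).
have : (INR (floorR x + floorR y) < INR (floorR (x + y) + 1))%R
  by rewrite !plus_INR /=; lra.
move/INR_lt/ltP; rewrite addn1 ltnS //.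
Qed.
Lemma nth_mk (T : Type) m (F : 'I_m -> T) x0 j (H : j < m) :
  nth x0 [tuple F i | i < m] j = F (Ordinal H).
Proof. by rewrite -(tnth_nth x0 _ (Ordinal H)) tnth_mktuple. Qed.

Arguments nth_mk {T m} F x0 {j} H.

Definition rd q' m (s : seq 'I_q'.+1) : m.-tuple 'I_q'.+1 :=
  [tuple nth ord0 s (nat_of_ord i) | i < m].

Definition TT q' a b : finType := (a.-tuple 'I_q'.+1 * b.-tuple 'I_q'.+1)%type.
Arguments rd {q'} m s.

Lemma code_ok q' n (C1 C2 C3 C4 C5 C6 C7 : R) k1d k1r k2d k2r
  (h4 : k1d <= nsym n C4) (h1 : k1r <= nsym n C1) (h7 : k1r <= nsym n C7)
  (h5 : k2d <= nsym n C5) (h2 : k2r <= nsym n C2) (h6 : k2r <= nsym n C6)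
  (h3 : k1r + k2r <= nsym n C3) (eps : R) (He : (0 <= eps)%R) :
    exists (f1 : 'I_#|(TT q' k1d k1r)| -> blk q'.+1 n C1) (f4 : 'I_#|(TT q' k1d k1r)| -> blk q'.+1 n C4)
           (f2 : 'I_#|(TT q' k2d k2r)| -> blk q'.+1 n C2) (f5 : 'I_#|(TT q' k2d k2r)| -> blk q'.+1 n C5)
           (f3 : blk q'.+1 n C1 -> blk q'.+1 n C2 -> blk q'.+1 n C3)
           (f6 : blk q'.+1 n C3 -> blk q'.+1 n C6)
           (f7 : blk q'.+1 n C3 -> blk q'.+1 n C7)
           (g1 : blk q'.+1 n C4 -> blk q'.+1 n C7 -> 'I_#|(TT q' k1d k1r)|)
           (g2 : blk q'.+1 n C5 -> blk q'.+1 n C6 -> 'I_#|(TT q' k2d k2r)|),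
      (INR #|[set w : 'I_#|(TT q' k1d k1r)| * 'I_#|(TT q' k2d k2r)| |
               (g1 (f4 w.1) (f7 (f3 (f1 w.1) (f2 w.2))) != w.1)
            || (g2 (f5 w.2) (f6 (f3 (f1 w.1) (f2 w.2))) != w.2)]|
         <= eps * INR (#|(TT q' k1d k1r)| * #|(TT q' k2d k2r)|))%R.
Proof.
exists (fun w => rd _ (@enum_val (TT q' k1d k1r) predT w).2), (fun w => rd _ (@enum_val (TT q' k1d k1r) predT w).1).
exists (fun w => rd _ (@enum_val (TT q' k2d k2r) predT w).2), (fun w => rd _ (@enum_val (TT q' k2d k2r) predT w).1).
exists (fun b1 b2 => [tuple (if nat_of_ord i < k1r then nth ord0 b1 i
                              else nth ord0 b2 (i - k1r)) | i < nsym n C3]).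
exists (fun b3 => [tuple nth ord0 b3 (nat_of_ord i + k1r) | i < nsym n C6]).
exists (fun b3 => rd _ b3).
exists (fun b4 b7 => enum_rank ((rd k1d b4, rd k1r b7) : TT q' k1d k1r)).
exists (fun b5 b6 => enum_rank ((rd k2d b5, rd k2r b6) : TT q' k2d k2r)).
match goal with |- context [finset ?P] => have -> : finset P = set0 end.
  apply/setP => [[w1 w2]]; rewrite !inE /=.
  rewrite -{3}(enum_valK w1) -{4}(enum_valK w2).
  case: (enum_val w1) => x1 y1; case: (enum_val w2) => x2 y2 /=.
  apply/norP; split; apply/negPn/eqP; congr enum_rank; congr pair;
    apply: eq_from_tnth => i; rewrite /rd !tnth_mktuple.
  - have Hi : i < nsym n C4 := leq_trans (ltn_ord i) h4.
    by rewrite (nth_mk _ _ Hi) /= (tnth_nth ord0).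
  - have Hi : i < nsym n C7 := leq_trans (ltn_ord i) h7.
    have Hi3 : i < nsym n C3 := leq_trans (ltn_ord i) (leq_trans (leq_addr _ _) h3).
    have Hi1 : i < nsym n C1 := leq_trans (ltn_ord i) h1.
    by rewrite (nth_mk _ _ Hi) /= (nth_mk _ _ Hi3) /= ltn_ord (nth_mk _ _ Hi1) /= (tnth_nth ord0).
  - have Hi : i < nsym n C5 := leq_trans (ltn_ord i) h5.
    by rewrite (nth_mk _ _ Hi) /= (tnth_nth ord0).
  - have Hi : i < nsym n C6 := leq_trans (ltn_ord i) h6.
    have Hi3 : i + k1r < nsym n C3.
      by apply: leq_trans h3; rewrite addnC ltn_add2l.
    have Hi2 : i < nsym n C2 := leq_trans (ltn_ord i) h2.
    rewrite (nth_mk _ _ Hi) /= (nth_mk _ _ Hi3) /= ltnNge leq_addl /= addnK.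
    by rewrite (nth_mk _ _ Hi2) /= (tnth_nth ord0).
rewrite cards0; change (INR 0) with 0%R.
apply: Rmult_le_pos => //; apply: pos_INR.
Qed.

Lemma choose_n eps : (0 < eps)%R -> exists n, 0 < n /\ (2 <= INR n * eps)%R.
Proof.
move=> He.
have H0 : (0 <= 2 / eps)%R by apply: Rlt_le; apply: Rdiv_lt_0_compat; lra.
have [A B] := floorR_spec _ H0.
exists (floorR (2 / eps) + 1); split; first by rewrite addn1.
rewrite plus_INR /=.
have : (2 / eps * eps = 2)%R by field; lra.
nra.
Qed.

Lemma INR_expn a b : INR (a ^ b) = (INR a ^ b)%R.
Proof.
elim: b => [|b IH] //=.
by rewrite expnS -IH -mult_INR.
Qed.

Lemma rate_ok q' k (x : R) : (x <= INR k)%R ->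
  (Rpower (INR q'.+1) x <= INR (q'.+1 ^ k))%R.
Proof.
move=> Hx.
have Hq : (1 <= INR q'.+1)%R by rewrite S_INR; have := pos_INR q'; lra.
rewrite INR_expn -Rpower_pow; last lra.
exact: Rle_Rpower.
Qed.

Lemma cardTT q' a b : #|TT q' a b| = q'.+1 ^ (a + b).
Proof. by rewrite /TT card_prod !card_tuple card_ord expnD. Qed.

Theorem theorem7 (q : nat) (Hq : prime_power q)
  (C1 C2 C3 C4 C5 C6 C7 R1 R2 : R)
  (H1 : (0 <= C1)%R) (H2 : (0 <= C2)%R) (H3 : (0 <= C3)%R) (H4 : (0 <= C4)%R)
  (H5 : (0 <= C5)%R) (H6 : (0 <= C6)%R) (H7 : (0 <= C7)%R)
  (HR1 : (0 <= R1)%R) (HR2 : (0 <= R2)%R)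
  (B1 : (R1 <= Rmin C1 C7 + Rmin R1 C4)%R)
  (B2 : (R2 <= Rmin C2 C6 + Rmin R2 C5)%R)
  (B3 : (R1 + R2 <= C3 + Rmin R2 C5 + Rmin R1 C4)%R) :
  bf2_achievable q C1 C2 C3 C4 C5 C6 C7 R1 R2.
Proof.
case: q Hq => [|q'] Hq.
  case: Hq => p [k [Hp [_ E]]].
  have Hp0 := prime_gt0 Hp.
  have : Nat.pow p k <> 0%coq_nat.
    apply: Nat.pow_nonzero; move=> Hp1; by rewrite Hp1 in Hp0.
  by rewrite -E.
move=> eps He.
have [n [Hn Hne]] := choose_n _ He.
have Hm1 := Rmin_l R1 C4. have Hm2 := Rmin_r R1 C4.
have Hm3 := Rmin_l R2 C5. have Hm4 := Rmin_r R2 C5.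
have Hm5 := Rmin_l C1 C7. have Hm6 := Rmin_r C1 C7.
have Hm7 := Rmin_l C2 C6. have Hm8 := Rmin_r C2 C6.
have Ha1 : (0 <= Rmin R1 C4)%R by apply: Rmin_glb.
have Ha2 : (0 <= Rmin R2 C5)%R by apply: Rmin_glb.
set a1 := Rmin R1 C4 in Hm1 Hm2 Ha1 B1 B3.
set a2 := Rmin R2 C5 in Hm3 Hm4 Ha2 B2 B3.
set N := INR n.
have HN : (0 <= N)%R by apply: pos_INR.
have mono : forall x y, (0 <= x)%R -> (x <= y)%R -> floorR (N * x) <= floorR (N * y).
  move=> x y Hx Hxy; apply: floorR_mono.
    exact: Rmult_le_pos.
  exact: Rmult_le_compat_l.
have Ht1 : (0 <= R1 - a1)%R by lra.
have Ht2 : (0 <= R2 - a2)%R by lra.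
set k1d := floorR (N * a1).
set k1r := floorR (N * (R1 - a1)).
set k2d := floorR (N * a2).
set k2r := floorR (N * (R2 - a2)).
have h4 : k1d <= nsym n C4 by apply: mono.
have h5 : k2d <= nsym n C5 by apply: mono.
have h1 : k1r <= nsym n C1 by apply: mono => //; lra.
have h7 : k1r <= nsym n C7 by apply: mono => //; lra.
have h2 : k2r <= nsym n C2 by apply: mono => //; lra.
have h6 : k2r <= nsym n C6 by apply: mono => //; lra.
have h3 : k1r + k2r <= nsym n C3.
  apply: leq_trans (floorR_add _ _ (Rmult_le_pos _ _ HN Ht1) (Rmult_le_pos _ _ HN Ht2)) _.
  rewrite -Rmult_plus_distr_l; apply: mono; lra.
have [A1 A1'] := floorR_spec _ (Rmult_le_pos _ _ HN Ha1).
have [A2 A2'] := floorR_spec _ (Rmult_le_pos _ _ HN Ha2).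
have [A3 A3'] := floorR_spec _ (Rmult_le_pos _ _ HN Ht1).
have [A4 A4'] := floorR_spec _ (Rmult_le_pos _ _ HN Ht2).
exists n, #|TT q' k1d k1r|, #|TT q' k2d k2r|; split => //.
split.
  rewrite cardTT; apply: rate_ok; rewrite plus_INR -/k1d -/k1r.
  have : (N * (R1 - eps) = N * a1 + N * (R1 - a1) - N * eps)%R by ring.
  fold N in Hne; rewrite -/N /k1d /k1r; lra.
split.
  rewrite cardTT; apply: rate_ok; rewrite plus_INR -/k2d -/k2r.
  have : (N * (R2 - eps) = N * a2 + N * (R2 - a2) - N * eps)%R by ring.
  fold N in Hne; rewrite -/N /k2d /k2r; lra.
apply: code_ok => //; lra.
Qed.
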